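(* Let $G_1=(V,D_1)$ and $G_2=(V,D_2)$ be directed graphs with the same Jacobian matroid. If two nodes $i\neq j$ are adjacent or have a common child in one of the graphs, then they are adjacent or have a common child in the other graph.
   Context: A directed graph $G=(V,D)$ has edge set $D\subseteq V\times V$ of ordered pairs $(i,j)$, $i\neq j$. $\Lambda$ is the $V\times V$ matrix with indeterminate entries $\lambda_{ij}$ for $(i,j)\in D$ and zeros elsewhere, and $s$ is a further indeterminate. Let $\psi_G(\Lambda,s)=s(I-\Lambda)(I-\Lambda)^T=K$. The transposed Jacobian $J(\psi_G)$ has rows indexed by $\{\lambda_{kl}:(k,l)\in D\}\cup\{s\}$ and columns indexed by $K_{ij}$, $i\le j$, with entries $\partial K_{ij}/\partial\theta$. The Jacobian matroid of $G$ is the matroid on the column labels $\{K_{ij}\}$ in which a set is independent iff its columns are linearly independent over $\mathbb{R}(\lambda,s)$. *)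

(* Defs.v *)
From HB Require Import structures.
From mathcomp Require Import all_boot all_order all_algebra.
From mathcomp Require Import fraction.
From mathcomp Require Import mpoly.
From mathcomp Require Import reals.
Set Implicit Arguments. Unset Strict Implicit. Unset Printing Implicit Defensive.
Import Order.TTheory GRing.Theory Num.Theory.
Local Open Scope ring_scope.

Section Jacobian.
Variables (R : realType) (n : nat).

Definition loopless (D : {set 'I_n * 'I_n}) := forall i : 'I_n, (i, i) \notin D.

(* polynomial ring in the indeterminates lambda_kl ((k,l) in V x V) and s *)
Definition nvars := (n * n).+1.
Definition PR := {mpoly R[nvars]}.
Definition FR := {fraction PR}.

Definition lam_idx (k l : 'I_n) : 'I_nvars :=
  widen_ord (leqnSn _) (mxvec_index k l).
Definition s_idx : 'I_nvars := ord_max.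

Definition Lambda (D : {set 'I_n * 'I_n}) : 'M[PR]_n :=
  \matrix_(k, l) (if (k, l) \in D then 'X_(lam_idx k l) else 0).

Definition Kmat (D : {set 'I_n * 'I_n}) : 'M[PR]_n :=
  'X_s_idx *: ((1%:M - Lambda D) *m (1%:M - Lambda D)^T).

(* column labels K_ij with i <= j *)
Definition Klab := {p : 'I_n * 'I_n | (p.1 <= p.2)%N}.

(* transposed Jacobian: rows indexed by variables, columns by labels,
   entries in the fraction field R(lambda, s) *)
Definition jac (D : {set 'I_n * 'I_n}) (v : 'I_nvars) (c : Klab) : FR :=
  @tofrac PR ((Kmat D (sval c).1 (sval c).2)^`M(v)).

Definition jac_indep (D : {set 'I_n * 'I_n}) (S : {set Klab}) : Prop :=
  forall a : Klab -> FR,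
    (forall v : 'I_nvars, \sum_(c in S) a c * jac D v c = 0) ->
    forall c, c \in S -> a c = 0.

Definition same_jacobian_matroid (D1 D2 : {set 'I_n * 'I_n}) : Prop :=
  forall S : {set Klab}, jac_indep D1 S <-> jac_indep D2 S.

Definition adjacent (D : {set 'I_n * 'I_n}) (i j : 'I_n) : Prop :=
  ((i, j) \in D) \/ ((j, i) \in D).

Definition common_child (D : {set 'I_n * 'I_n}) (i j : 'I_n) : Prop :=
  exists k : 'I_n, ((i, k) \in D) /\ ((j, k) \in D).

End Jacobian.

(* Main.v *)
Require Import Defs.
From HB Require Import structures.
From mathcomp Require Import all_boot all_order all_algebra.
From mathcomp Require Import fraction mpoly reals.
From Stdlib Require Import Classical.
From mathcomp Require Import ring.
Set Implicit Arguments. Unset Strict Implicit. Unset Printing Implicit Defensive.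
Import Order.TTheory GRing.Theory Num.Theory.
Local Open Scope ring_scope.

Section S.
Variables (R : realType) (n : nat).

Lemma indep1 (D : {set 'I_n * 'I_n}) (c : Klab n) :
  jac_indep R D [set c] <-> exists v, jac R D v c != 0.
Proof.
split.
  move=> H; apply/not_all_not_ex => Hall.
  have H1 : (fun _ : Klab n => (1 : FR R n)) c = 0.
    apply: H (set11 c) => v.
    rewrite big_set1 mul1r; apply/eqP/negPn/negP => Hn; exact: Hall v Hn.
  by move/eqP: H1; rewrite oner_eq0.
move=> [v0 Hv] a Ha c'; rewrite inE => /eqP ->.
have := Ha v0; rewrite big_set1 => /eqP; rewrite mulf_eq0 (negPf Hv) orbF.
by move/eqP.
Qed.

Definition cond (D : {set 'I_n * 'I_n}) i j := adjacent D i j \/ common_child D i j.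

Lemma lam_inj (k l k' l' : 'I_n) : lam_idx k l = lam_idx k' l' -> (k, l) = (k', l').
Proof.
rewrite /lam_idx /mxvec_index => /(congr1 val) /= /val_inj.
by apply: enum_rank_inj.
Qed.

Lemma lam_neq_s (k l : 'I_n) : lam_idx k l != s_idx n.
Proof.
apply/eqP => /(congr1 val) /=.
move=> E; have := ltn_ord (mxvec_index k l).
by rewrite [X in (X < _)%N]E ltnn.
Qed.

Lemma KmatE (D : {set 'I_n * 'I_n}) (i j : 'I_n) : Kmat R D i j =
  ('X_(s_idx n) : PR R n) * \sum_k (((i == k)%:R - (if (i, k) \in D then 'X_(lam_idx i k) else 0))
    * ((j == k)%:R - (if (j, k) \in D then 'X_(lam_idx j k) else 0))).
Proof.
rewrite /Kmat mxE mxE; congr (_ * _); apply: eq_bigr => k _.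
by rewrite !mxE.
Qed.

Lemma Kzero (D : {set 'I_n * 'I_n}) (i j : 'I_n) : i != j -> ~ cond D i j -> Kmat R D i j = 0.
Proof.
move=> nij nc; rewrite KmatE big1 ?mulr0 // => k _.
have nij' : (i, j) \notin D by apply/negP => H; apply: nc; left; left.
have nji' : (j, i) \notin D by apply/negP => H; apply: nc; left; right.
have nk : ~~ (((i, k) \in D) && ((j, k) \in D)).
  by apply/negP => /andP [H1 H2]; apply: nc; right; exists k.
have [eki|nki] := eqVneq k i.
  by subst k; rewrite (negPf nji') (eq_sym j i) (negPf nij) subrr mulr0.
have [ekj|nkj] := eqVneq k j.
  by subst k; rewrite (negPf nij') subr0 mulr0n mul0r.
rewrite mulr0n !sub0r.
move: nk; case: ((i, k) \in D); case: ((j, k) \in D) => //= _;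
  by rewrite ?oppr0 ?mulr0 ?mul0r.
Qed.

Definition pt (E : {set 'I_n * 'I_n}) (v : 'I_(nvars n)) : R :=
  ([exists p in E, v == lam_idx p.1 p.2])%:R.

Lemma pt_lam E (k l : 'I_n) : pt E (lam_idx k l) = ((k, l) \in E)%:R.
Proof.
rewrite /pt; congr (nat_of_bool _)%:R; apply/existsP/idP.
  by move=> [[p1 p2] /andP [pE /eqP /lam_inj ->]].
by move=> kE; exists (k, l); rewrite kE eqxx.
Qed.

Lemma pt_s E : pt E (s_idx n) = 0.
Proof.
rewrite /pt; case: existsP => // [[p /andP [_ /eqP e]]].
by move: (lam_neq_s p.1 p.2); rewrite -e eqxx.
Qed.

Lemma eval_entry (D E : {set 'I_n * 'I_n}) (k l : 'I_n) : E \subset D ->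
  meval (pt E) (if (k, l) \in D then 'X_(lam_idx k l) else 0) = ((k, l) \in E)%:R.
Proof.
move=> sub; case: ifP => H; first by rewrite mevalXU pt_lam.
have -> : (k, l) \in E = false by apply/negP => /(subsetP sub); rewrite H.
by rewrite meval0.
Qed.

Lemma Kderiv (D E : {set 'I_n * 'I_n}) (i j : 'I_n) : E \subset D ->
  \sum_k (((i == k)%:R - ((i, k) \in E)%:R) * ((j == k)%:R - ((j, k) \in E)%:R)) != 0 :> R ->
  (Kmat R D i j)^`M(s_idx n) != 0.
Proof.
move=> sub H.
suff : meval (pt E) ((Kmat R D i j)^`M(s_idx n)) != 0.
  by apply: contra => /eqP ->; rewrite meval0.
rewrite KmatE mderivM mevalD !mevalM mevalXU pt_s mul0r addr0.
rewrite mderivX mevalZ mevalX mnm1E eqxx mul1r big1 ?mul1r; last first.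
  by move=> v _; rewrite mnmBE subnn expr0.
rewrite raddf_sum; move: H; congr (_ != _); apply: eq_bigr => k _.
by rewrite -[RHS]/(meval (pt E) _) mevalM !mevalB !rmorph_nat !(eval_entry _ _ sub).
Qed.

Lemma neqsym (T : eqType) (a b : T) : a != b -> b != a.
Proof. by rewrite eq_sym. Qed.

Definition F (E : {set 'I_n * 'I_n}) (i j k : 'I_n) : R :=
  ((i == k)%:R - ((i, k) \in E)%:R) * ((j == k)%:R - ((j, k) \in E)%:R).

Lemma sum_a (i j : 'I_n) : i != j -> \sum_k F [set (i, j)] i j k = -1.
Proof.
move=> nij; have nji := neqsym nij.
rewrite (bigD1 j) //= big1 => [|k nkj]; rewrite /F !inE !xpair_eqE ?eqxx
  ?(negPf nij) ?(negPf nji) ?(negPf nkj) ?(negPf (neqsym nkj)) /=.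
  by ring.
by ring.
Qed.

Lemma sum_b (i j : 'I_n) : i != j -> \sum_k F [set (j, i)] i j k = -1.
Proof.
move=> nij; have nji := neqsym nij.
rewrite (bigD1 i) //= big1 => [|k nki]; rewrite /F !inE !xpair_eqE ?eqxx
  ?(negPf nij) ?(negPf nji) ?(negPf nki) ?(negPf (neqsym nki)) /=.
  by ring.
by ring.
Qed.

Lemma sum_c (i j c : 'I_n) : i != j -> c != i -> c != j ->
  \sum_k F [set (i, c); (j, c)] i j k = 1.
Proof.
move=> nij nci ncj; have nji := neqsym nij.
rewrite (bigD1 c) //= big1 => [|k nkc]; rewrite /F !inE !xpair_eqE ?eqxx
  ?(negPf nij) ?(negPf nji) ?(negPf nkc) ?(negPf (neqsym nkc))
  ?(negPf nci) ?(negPf ncj) ?(negPf (neqsym nci)) ?(negPf (neqsym ncj)) /=.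
  by ring.
have [<-|nik] := eqVneq i k; first by rewrite (negPf nji) /=; ring.
by rewrite /=; ring.
Qed.

Lemma cond_iff (D : {set 'I_n * 'I_n}) (i j : 'I_n) : loopless D -> i != j ->
  cond D i j <-> exists v, (Kmat R D i j)^`M(v) != 0.
Proof.
move=> lD nij; split; last first.
  move=> [v Hv]; apply: NNPP => nc.
  by move: Hv; rewrite Kzero // mderiv0 eqxx.
move=> C; exists (s_idx n); case: C => [[H|H]|[c [H1 H2]]].
- apply: (@Kderiv D [set (i, j)]); first by rewrite sub1set.
  by rewrite -/(F _ _ _ _) (sum_a nij) oppr_eq0 oner_eq0.
- apply: (@Kderiv D [set (j, i)]); first by rewrite sub1set.
  by rewrite -/(F _ _ _ _) (sum_b nij) oppr_eq0 oner_eq0.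
- have nci : c != i by apply/eqP => E; move: H1; rewrite E; apply/negP; exact: lD.
  have ncj : c != j by apply/eqP => E; move: H2; rewrite E; apply/negP; exact: lD.
  apply: (@Kderiv D [set (i, c); (j, c)]).
    by apply/subsetP => p; rewrite !inE => /orP [] /eqP ->.
  by rewrite -/(F _ _ _ _) (sum_c nij nci ncj) oner_eq0.
Qed.

Lemma cond_sym (D : {set 'I_n * 'I_n}) (i j : 'I_n) : cond D i j <-> cond D j i.
Proof.
rewrite /cond /adjacent /common_child.
split=> [[[H|H]|[c [H1 H2]]]|[[H|H]|[c [H1 H2]]]].
- by left; right.
- by left; left.
- by right; exists c; split.
- by left; right.
- by left; left.
- by right; exists c; split.
Qed.

End S.

Lemma key (R : realType) (n : nat) (D : {set 'I_n * 'I_n}) (i j : 'I_n) (h : (i <= j)%N) :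
  loopless D -> i != j ->
  cond D i j <-> jac_indep R D [set (exist _ (i, j) h : Klab n)].
Proof.
move=> lD nij; rewrite indep1 (cond_iff R) //; split.
  by move=> [v Hv]; exists v; rewrite /jac /= tofrac_eq0.
by move=> [v Hv]; exists v; move: Hv; rewrite /jac /= tofrac_eq0.
Qed.

Theorem lemma3p6 (R : realType) (n : nat) (D1 D2 : {set 'I_n * 'I_n}) :
  loopless D1 -> loopless D2 ->
  same_jacobian_matroid R D1 D2 ->
  forall i j : 'I_n, i != j ->
    (adjacent D1 i j \/ common_child D1 i j) <->
    (adjacent D2 i j \/ common_child D2 i j).
Proof.
move=> l1 l2 same i j nij.
change (cond D1 i j <-> cond D2 i j).
case: (leqP i j) => h.
  by rewrite (key R h l1 nij) (key R h l2 nij).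
have nji : j != i by rewrite eq_sym.
rewrite (cond_sym D1) (cond_sym D2).
by rewrite (key R (ltnW h) l1 nji) (key R (ltnW h) l2 nji).
Qed.
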